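(* Let $k\ge2$ and let $A=\{a_1,\dots,a_n\}$ be a sorted multiset of positive integers ($a_1\le\dots\le a_n$) forming a $k$-PART instance. Then there exists a perfect $p$ for $A$ such that, with $Q=\sum_{i=1}^pa_i$ and $q=\max\{i:a_i\le Q\}$, the $k$-PART$_R$ instance $(A,p)$ has an optimal solution $(S_1,\dots,S_k)$ satisfying: (1) every set $S_i$ containing only elements $j\le q$ satisfies $\Sigma(S_i,A)<2Q$; (2) every element $j>q$ is contained in a singleton set of the solution.
   Context: $[n]=\{1,\dots,n\}$; elements of sets are indices. $\Sigma(S,A)=\sum_{i\in S}a_i$. For pairwise disjoint $S_1,\dots,S_k\subseteq[n]$, $\mathcal{R}(S_1,\dots,S_k,A)=\max_i\Sigma(S_i,A)/\min_i\Sigma(S_i,A)$ if the minimum is positive and $+\infty$ otherwise. $k$-PART: find pairwise disjoint $S_1,\dots,S_k\subseteq[n]$ with $\bigcup_iS_i=[n]$ minimizing $\mathcal{R}$. $k$-PART$_R$ instance $(A,p)$ for $1\le p\le n-k+1$: find pairwise disjoint $S_1,\dots,S_k\subseteq[n]$ with $\bigcup_iS_i=[n]$, $\max(S_1)=p$ and $\max(S_i)>p$ for $1<i\le k$, minimizing $\mathcal{R}$. An integer $p$ with $1\le p\le n-k+1$ is called perfect for $A$ if the optimal ratio of the $k$-PART$_R$ instance $(A,p)$ equals the optimal ratio of the $k$-PART instance $A$. *)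

(* Defs.v *)
From HB Require Import structures.
From mathcomp Require Import all_boot all_order all_algebra.
Unset Printing Implicit Defensive.
Import Order.TTheory GRing.Theory Num.Theory.

(* Index j : 'I_n (0-based) stands for the paper's index j+1, value a_{j+1} = nth 0 A j.
   A candidate solution is S : nat -> {set 'I_n}; only S 0, ..., S (k-1) are used,
   S i standing for the paper's S_{i+1}. *)

Definition sigma (A : seq nat) (S : {set 'I_(size A)}) : nat :=
  \sum_(j in S) nth 0 A j.

(* max(S), in 1-based indices; 0 for the empty set *)
Definition setmax n (S : {set 'I_n}) : nat := \max_(j in S) j.+1.

(* extended nonnegative rationals: None = +infinity *)
Definition ext_le (x y : option rat) : bool :=
  match x, y with
  | _, None => true
  | None, Some _ => false
  | Some a, Some b => (a <= b)%R
  end.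

Definition ratio (A : seq nat) (k : nat) (S : nat -> {set 'I_(size A)}) : option rat :=
  let mx := \max_(i < k) sigma A (S i) in
  let mn := \big[minn/sigma A (S 0)]_(i < k) sigma A (S i) in
  if mn == 0 then None else Some ((mx%:R : rat) / mn%:R)%R.

Definition is_kpart (A : seq nat) (k : nat) (S : nat -> {set 'I_(size A)}) : Prop :=
  (forall i j, i < k -> j < k -> i <> j -> [disjoint S i & S j]) /\
  (forall x : 'I_(size A), exists2 i, i < k & x \in S i).

Definition is_kpartR (A : seq nat) (k p : nat) (S : nat -> {set 'I_(size A)}) : Prop :=
  is_kpart A k S /\ setmax (size A) (S 0) = p /\
  (forall i, 0 < i < k -> p < setmax (size A) (S i)).

Definition is_opt_val (A : seq nat) (k : nat)
  (P : (nat -> {set 'I_(size A)}) -> Prop) (v : option rat) : Prop :=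
  (exists S, P S /\ ratio A k S = v) /\
  (forall T, P T -> ext_le v (ratio A k T)).

Definition opt_kpartR (A : seq nat) (k p : nat) (S : nat -> {set 'I_(size A)}) : Prop :=
  is_kpartR A k p S /\ (forall T, is_kpartR A k p T -> ext_le (ratio A k S) (ratio A k T)).

Definition perfect (A : seq nat) (k p : nat) : Prop :=
  1 <= p <= size A - k + 1 /\
  exists v, is_opt_val A k (is_kpartR A k p) v /\ is_opt_val A k (is_kpart A k) v.

Definition Qval (A : seq nat) (p : nat) : nat := \sum_(i < p) nth 0 A i.

(* q = max { i : a_i <= Q } (1-based; 0 if no such i) *)
Definition qval (A : seq nat) (p : nat) : nat :=
  \max_(j < size A | nth 0 A j <= Qval A p) j.+1.

(* Main.v *)
Require Import Defs.
From mathcomp Require Import all_boot all_order all_algebra.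
From mathcomp Require Import zify.
Import Order.TTheory GRing.Theory Num.Theory.
Require Import Defs.



Lemma ext_le_trans x y z : ext_le x y -> ext_le y z -> ext_le x z.
Proof. by case: x; case: y; case: z => //= a b c; apply: le_trans. Qed.

Lemma ext_le_refl x : ext_le x x.
Proof. by case: x => //= a. Qed.

Lemma ext_le_total x y : ext_le x y || ext_le y x.
Proof. by case: x; case: y => //= a b; apply: le_total. Qed.

Lemma bigmin_le (k x0 : nat) (F : nat -> nat) i :
  i < k -> \big[minn/x0]_(j < k) F j <= F i.
Proof.
move=> Hi; set oi := Ordinal Hi.
have : oi \in index_enum 'I_k by rewrite mem_index_enum.
elim: (index_enum 'I_k) => // x r IH; rewrite big_cons inE => /orP [/eqP <-|/IH H].
  exact: geq_minl.
exact: leq_trans (geq_minr _ _) H.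
Qed.

Lemma bigmin_ge (k x0 : nat) (F : nat -> nat) y :
  y <= x0 -> (forall i, i < k -> y <= F i) -> y <= \big[minn/x0]_(j < k) F j.
Proof.
move=> H0 H; apply: (big_ind (fun m => y <= m)) => //.
  by move=> a b Ha Hb; rewrite leq_min Ha.
by move=> i _; apply: H.
Qed.

Definition mxS A k (S : nat -> {set 'I_(size A)}) := \max_(i < k) sigma A (S i).
Definition mnS A k (S : nat -> {set 'I_(size A)}) :=
  \big[minn/sigma A (S 0)]_(i < k) sigma A (S i).

Lemma ratioE A k S : ratio A k S =
  if mnS A k S == 0 then None else Some (((mxS A k S)%:R : rat) / (mnS A k S)%:R)%R.
Proof. by []. Qed.

Lemma mn_le A k S c : c < k -> mnS A k S <= sigma A (S c).
Proof. move=> Hc; rewrite /mnS; have := (bigmin_le k (sigma A (S 0)) (fun i => sigma A (S i)) c Hc); apply. Qed.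

Lemma mx_ge A k S c : c < k -> sigma A (S c) <= mxS A k S.
Proof. by move=> Hc; rewrite /mxS (leq_bigmax (Ordinal Hc)). Qed.

Lemma ratio_le A k S T : 0 < k ->
  (forall c, c < k -> mnS A k S <= sigma A (T c) <= mxS A k S) ->
  ext_le (ratio A k T) (ratio A k S).
Proof.
move=> k0 H.
have Hmx : mxS A k T <= mxS A k S.
  by apply/bigmax_leqP => i _; case/andP: (H i (ltn_ord i)).
have Hmn : mnS A k S <= mnS A k T.
  apply: (bigmin_ge k (sigma A (T 0)) (fun i => sigma A (T i))); first by case/andP: (H 0 k0).
  by move=> i /H /andP[].
rewrite [ratio A k S]ratioE; case: eqP => [_|/eqP HS]; first by case: (ratio A k T).
have HT : mnS A k T != 0 by rewrite -lt0n (leq_trans _ Hmn) // lt0n.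
rewrite ratioE (negbTE HT) /=.
have pS : (0 < (mnS A k S)%:R :> rat)%R by rewrite ltr0n lt0n.
have pT : (0 < (mnS A k T)%:R :> rat)%R by rewrite ltr0n lt0n.
rewrite ler_pdivrMr // mulrAC ler_pdivlMr // -!natrM ler_nat.
by apply: leq_mul.
Qed.



Lemma disjointP (T : finType) (A B : {set T}) :
  reflect (forall x, x \in A -> x \in B -> False) [disjoint A & B].
Proof.
rewrite disjoint_subset; apply: (iffP subsetP) => H x.
  by move=> /H; rewrite inE => /negP.
by move=> Hx; rewrite inE; apply/negP => /(H x Hx).
Qed.

Definition Sof n k (lab : {ffun 'I_n -> 'I_k}) (c : nat) : {set 'I_n} :=
  [set x | nat_of_ord (lab x) == c].
Arguments Sof {n k} lab c.

Lemma in_Sof n k (lab : {ffun 'I_n -> 'I_k}) c x : (x \in Sof lab c) = (nat_of_ord (lab x) == c).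
Proof. by rewrite inE. Qed.

Lemma Sof_kpart A k (lab : {ffun 'I_(size A) -> 'I_k}) : is_kpart A k (Sof lab).
Proof.
split.
  move=> i j _ _ Hij; apply/disjointP => x; rewrite !in_Sof => /eqP -> /eqP; done.
by move=> x; exists (lab x); rewrite ?in_Sof.
Qed.

Lemma kpart_lab A k (U : nat -> {set 'I_(size A)}) : 0 < k -> is_kpart A k U ->
  exists lab : {ffun 'I_(size A) -> 'I_k}, forall i, i < k -> Sof lab i = U i.
Proof.
move=> k0 [Hd Hc].
exists [ffun x => odflt (Ordinal k0) [pick i : 'I_k | x \in U i]] => i Hi.
apply/setP => x; rewrite in_Sof ffunE; case: pickP => [j Hj|H] /=.
  apply/eqP/idP => [<- //|Hx]; case: (@eqP _ (nat_of_ord j) i) => // Hne; exfalso.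
  by have := Hd j i (ltn_ord j) Hi Hne; move/disjointP; apply; [exact: Hj|exact: Hx].
by have [j Hj Hx] := Hc x; have := H (Ordinal Hj); rewrite /= Hx.
Qed.

Lemma ratio_ext A k S T : 0 < k -> (forall i, i < k -> S i = T i) -> ratio A k S = ratio A k T.
Proof.
move=> k0 H; rewrite !ratioE /mnS /mxS (H 0 k0).
have E : forall i : 'I_k, sigma A (S i) = sigma A (T i) by move=> i; rewrite H.
by rewrite (eq_bigr _ (fun i _ => E i)) (eq_bigr _ (fun i _ => E i)).
Qed.

Lemma exists_min (T : finType) (f : T -> option rat) (t0 : T) :
  exists t, forall u, ext_le (f t) (f u).
Proof.
suff [t Ht] : exists t, forall u, u \in enum T -> ext_le (f t) (f u).
  by exists t => u; apply: Ht; rewrite mem_enum.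
elim: (enum T) => [|x r [t Ht]]; first by exists t0.
case/orP: (ext_le_total (f x) (f t)) => Hxt.
  exists x => u; rewrite inE => /orP [/eqP ->|/Ht]; first exact: ext_le_refl.
  exact: ext_le_trans.
exists t => u; rewrite inE => /orP [/eqP ->|/Ht] //.
Qed.

Lemma sigma_ge A (S : {set 'I_(size A)}) x : x \in S -> nth 0 A x <= sigma A S.
Proof. by move=> Hx; rewrite /sigma (bigD1 x) //= leq_addr. Qed.

Lemma sigma_pos A (S : {set 'I_(size A)}) : 0 < sigma A S -> exists x, x \in S.
Proof.
move=> H; apply/set0Pn; apply/negP => /eqP E; move: H; by rewrite /sigma E big_set0.
Qed.

Lemma setmax_mem n (S : {set 'I_n}) (x : 'I_n) : x \in S -> x < setmax n S.
Proof. by move=> Hx; rewrite /setmax (leq_bigmax_cond (F := fun j : 'I_n => j.+1) x Hx). Qed.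

Lemma setmax_le n (S : {set 'I_n}) m : (forall x : 'I_n, x \in S -> x < m) -> setmax n S <= m.
Proof. by move=> H; apply/bigmax_leqP => x Hx; apply: H. Qed.

Lemma setmax_wit n (S : {set 'I_n}) (x : 'I_n) : x \in S -> exists2 w : 'I_n, w \in S & setmax n S = w.+1.
Proof.
move=> Hx; rewrite /setmax (bigop.bigmax_eq_arg x) //.
by case: arg_maxnP => // w Hw _; exists w.
Qed.

Lemma nth_le_Q A p j : j < p -> nth 0 A j <= Qval A p.
Proof.
move=> Hj; rewrite /Qval (bigD1 (Ordinal Hj)) //=; exact: leq_addr.
Qed.

Lemma Q_split A p (S : {set 'I_(size A)}) : p <= size A -> (forall j : 'I_(size A), j \in S -> j < p) ->
  Qval A p = sigma A S + \sum_(j : 'I_(size A) | (j < p) && (j \notin S)) nth 0 A j.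
Proof.
move=> Hp HS; rewrite /Qval (big_ord_widen _ (fun j => nth 0 A j) Hp).
rewrite (bigID (fun j : 'I_(size A) => j \in S)) /=; congr (_ + _).
by rewrite /sigma; apply: eq_bigl => j; case: (boolP (j \in S)) => Hj; rewrite ?andbT ?andbF ?(HS j Hj).
Qed.

Lemma qval_ge A p (j : 'I_(size A)) : nth 0 A j <= Qval A p -> j < qval A p.
Proof. by move=> H; rewrite /qval (leq_bigmax_cond (F := fun j : 'I_(size A) => j.+1) j H). Qed.

Lemma qval_le A p (j : 'I_(size A)) : sorted leq A -> j < qval A p -> nth 0 A j <= Qval A p.
Proof.
move=> Hs Hj; rewrite leqNgt; apply/negP => HQ.
suff : qval A p <= j by rewrite leqNgt Hj.
apply/bigmax_leqP => j' Hj'; rewrite ltnNge; apply/negP => Hjj.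
have := sorted_leq_nth leq_trans leqnn 0 Hs.
move=> /(_ j j') H; move: H; rewrite !inE !ltn_ord => /(_ isT isT Hjj) H.
by move: HQ; rewrite ltnNge (leq_trans H Hj').
Qed.

Set Implicit Arguments. Unset Strict Implicit.

Definition Phi (A : seq nat) K (lab : {ffun 'I_(size A) -> 'I_K}) :=
  \sum_(c < K) (sigma A (Sof lab c))^2.

Definition mv (A : seq nat) K (lab : {ffun 'I_(size A) -> 'I_K}) (i0 : 'I_K) (D : {set 'I_(size A)})
  : {ffun 'I_(size A) -> 'I_K} := [ffun x => if x \in D then i0 else lab x].
Arguments Phi {A K} lab.
Arguments mv {A K} lab i0 D.

Lemma mv_sets (A : seq nat) K (lab : {ffun 'I_(size A) -> 'I_K}) (i0 i : 'I_K) (D : {set 'I_(size A)}) : i0 != i -> D \subset Sof lab i ->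
  [/\ Sof (mv lab i0 D) i0 = Sof lab i0 :|: D,
      Sof (mv lab i0 D) i = Sof lab i :\: D &
      forall c : 'I_K, c != i0 -> c != i -> Sof (mv lab i0 D) c = Sof lab c].
Proof.
move=> Hne /subsetP HD; split.
- apply/setP => x; rewrite !inE ffunE; case: (boolP (x \in D)) => Hx; first by rewrite eqxx orbT.
  by rewrite orbF.
- apply/setP => x; rewrite !inE ffunE; case: (boolP (x \in D)) => Hx /=.
    by apply/negP => /eqP /val_inj E; move: Hne; rewrite E eqxx.
  by [].
- move=> c H1 H2; apply/setP => x; rewrite !inE ffunE; case: (boolP (x \in D)) => Hx //.
  have := HD x Hx; rewrite in_Sof => /eqP E.
  apply/idP/idP => /eqP /val_inj E'.
    by move: H1; rewrite E' eqxx.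
  by move: H2; rewrite -E' (val_inj E) eqxx.
Qed.

Lemma sigmaU (A : seq nat) (S D : {set 'I_(size A)}) : [disjoint S & D] ->
  sigma A (S :|: D) = sigma A S + sigma A D.
Proof.
move=> /disjointP Hd; rewrite /sigma (big_setID D) addnC; congr (_ + _); apply: eq_bigl => x;
  rewrite !inE; case: (boolP (x \in D)) => Hx; rewrite ?orbT ?orbF //=.
all: try by rewrite andbF.
by case: (boolP (x \in S)) => // Hs; case: (Hd x Hs Hx).
Qed.

Lemma sigmaD (A : seq nat) (S D : {set 'I_(size A)}) : D \subset S ->
  sigma A (S :\: D) + sigma A D = sigma A S.
Proof.
move=> HD; rewrite [sigma A S]/sigma (big_setID D) addnC; congr (_ + _).
by rewrite (setIidPr HD).
Qed.

Lemma Phi_split (A : seq nat) K (lab : {ffun 'I_(size A) -> 'I_K}) (i0 i : 'I_K) : i0 != i ->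
  Phi lab = (sigma A (Sof lab i0))^2 + (sigma A (Sof lab i))^2 +
    \sum_(c < K | (c != i0) && (c != i)) (sigma A (Sof lab c))^2.
Proof.
move=> Hne; rewrite /Phi (bigD1 i0) //= (bigD1 i) /=; last by rewrite eq_sym.
by rewrite addnA.
Qed.

Lemma Phi_mv (A : seq nat) K (lab : {ffun 'I_(size A) -> 'I_K}) (i0 i : 'I_K) (D : {set 'I_(size A)}) : i0 != i -> D \subset Sof lab i ->
  sigma A (Sof lab i0) + sigma A D <= sigma A (Sof lab i) ->
  Phi (mv lab i0 D) <= Phi lab /\
  (sigma A (Sof lab i0) + sigma A D < sigma A (Sof lab i) -> 0 < sigma A D ->
   Phi (mv lab i0 D) < Phi lab).
Proof.
move=> Hne HD Hle; have Hne2 := Hne; have [E1 E2 E3] := @mv_sets A K lab i0 i D Hne HD.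
rewrite (@Phi_split A K lab i0 i Hne) (@Phi_split A K (mv lab i0 D) i0 i Hne) E1 E2.
have Hdis : [disjoint Sof lab i0 & D].
  apply/disjointP => x; rewrite in_Sof => /eqP H1 /(subsetP HD); rewrite in_Sof => /eqP H2.
  by move: Hne2; rewrite (val_inj (etrans (esym H1) H2)) eqxx.
rewrite (@sigmaU A _ _ Hdis).
have ER : \sum_(c < K | (c != i0) && (c != i)) (sigma A (Sof (mv lab i0 D) c))^2 =
          \sum_(c < K | (c != i0) && (c != i)) (sigma A (Sof lab c))^2.
  by apply: eq_bigr => c /andP [H1 H2]; rewrite E3.
rewrite ER; have := sigmaD HD; move: Hle.
set a := sigma A (Sof lab i0); set b := sigma A (Sof lab i); set d := sigma A D.
set b' := sigma A _; set R := \sum_(_ < _ | _) _.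
move=> Hle Eb; split; first nia.
move=> Hlt Hd; nia.
Qed.

Lemma mv_sig (A : seq nat) K (lab : {ffun 'I_(size A) -> 'I_K}) (i0 i : 'I_K) (D : {set 'I_(size A)}) :
  i0 != i -> D \subset Sof lab i ->
  sigma A (Sof (mv lab i0 D) i0) = sigma A (Sof lab i0) + sigma A D /\
  sigma A (Sof (mv lab i0 D) i) + sigma A D = sigma A (Sof lab i).
Proof.
move=> Hne HD; have Hne2 := Hne; have [E1 E2 E3] := @mv_sets A K lab i0 i D Hne HD.
have Hdis : [disjoint Sof lab i0 & D].
  apply/disjointP => x; rewrite in_Sof => /eqP H1 /(subsetP HD); rewrite in_Sof => /eqP H2.
  by move: Hne2; rewrite (val_inj (etrans (esym H1) H2)) eqxx.
by rewrite E1 E2 (@sigmaU A _ _ Hdis) (sigmaD HD).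
Qed.

Unset Implicit Arguments. Set Strict Implicit.

Theorem theorem18 (k : nat) (A : seq nat) :
  2 <= k -> k <= size A -> sorted leq A -> all (fun a => 0 < a) A ->
  exists p, perfect A k p /\
    exists S : nat -> {set 'I_(size A)}, opt_kpartR A k p S /\
      (forall i, i < k -> (forall j : 'I_(size A), j \in S i -> j.+1 <= qval A p) ->
         sigma A (S i) < 2 * Qval A p) /\
      (forall j : 'I_(size A), qval A p < j.+1 -> exists2 i, i < k & S i = [set j]).
Proof.
move=> Hk HkA Hs Hall.
case: k Hk HkA => [|[|k]] // _ HkA.
have hpos : forall j : 'I_(size A), 0 < nth 0 A j.
  by move=> j; apply: (all_nthP 0 Hall); exact: ltn_ord.
pose lab0' : {ffun 'I_(size A) -> 'I_k.+2} := [ffun=> ord0].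
have [lab0 Hlab0] := exists_min _ (fun l : {ffun 'I_(size A) -> 'I_k.+2} => ratio A k.+2 (Sof l)) lab0'.
pose P := fun l : {ffun 'I_(size A) -> 'I_k.+2} =>
  ext_le (ratio A k.+2 (Sof l)) (ratio A k.+2 (Sof lab0)).
pose am := fun l : {ffun 'I_(size A) -> 'I_k.+2} =>
  [arg min_(c < (ord0 : 'I_k.+2)) setmax (size A) (Sof l c)].
pose pm := fun l => setmax (size A) (Sof l (am l)).
pose mu := fun l => Phi l * (size A).+2 + ((size A).+1 - pm l).
have [lab Plab Hmin] : exists2 lab, P lab & forall l, P l -> mu lab <= mu l.
  case: (@arg_minnP _ lab0 P mu (ext_le_refl _)) => l Pl Hl; by exists l.
set S := Sof lab.
have Hopt : forall U, is_kpart A k.+2 U -> ext_le (ratio A k.+2 S) (ratio A k.+2 U).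
  move=> U HU; have [lU HlU] := kpart_lab A k.+2 U (isT : 0 < k.+2) HU.
  rewrite -(ratio_ext A k.+2 _ _ isT HlU).
  exact: ext_le_trans Plab (Hlab0 lU).
have Hmn : 0 < mnS A k.+2 S.
  pose dg : {ffun 'I_(size A) -> 'I_k.+2} := [ffun x : 'I_(size A) => inord (minn x k.+1)].
  have Hcls : forall c, c < k.+2 -> 0 < sigma A (Sof dg c).
    move=> c Hc; have Hcn : c < size A by apply: leq_trans Hc HkA.
    apply: leq_trans (hpos (Ordinal Hcn)) (sigma_ge A (Sof dg c) (Ordinal Hcn) _); rewrite in_Sof ffunE /= inordK; last by lia.
    by apply/eqP; lia.
  have Hdg : 0 < mnS A k.+2 (Sof dg).
    by apply: (bigmin_ge k.+2 _ (fun i => sigma A (Sof dg i))); [exact: Hcls | move=> i Hi; exact: Hcls].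
  have := Hopt _ (Sof_kpart A k.+2 dg).
  rewrite [ratio A k.+2 (Sof dg)]ratioE (negbTE (lt0n_neq0 Hdg)) ratioE.
  by case: eqP => // /eqP; rewrite lt0n.
have Hcl : forall c, c < k.+2 -> mnS A k.+2 S <= sigma A (S c) <= mxS A k.+2 S.
  by move=> c Hc; rewrite mn_le // mx_ge.
have Hnonempty : forall c, c < k.+2 -> exists x, x \in S c.
  move=> c Hc; apply: sigma_pos; case/andP: (Hcl c Hc) => H _; exact: leq_trans Hmn H.
have Hi0 : forall c : 'I_k.+2, setmax (size A) (S (am lab)) <= setmax (size A) (S c).
  by move=> c; rewrite /am; case: arg_minnP => // c0 _ H; exact: H.
set i0 := am lab.
set p := setmax (size A) (S i0).
have HS0 : forall x : 'I_(size A), x \in S i0 -> x < p by move=> x Hx; exact: setmax_mem.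
have Hp1 : 0 < p.
  by have [x Hx] := Hnonempty i0 (ltn_ord i0); apply: leq_ltn_trans (HS0 x Hx).
have Hpn : p <= size A by apply: setmax_le => x _; exact: ltn_ord.
have HQsplit := Q_split A p (S i0) Hpn HS0.
have HQ0 : sigma A (S i0) <= Qval A p by rewrite HQsplit leq_addr.
have HQpos : 0 < Qval A p.
  have Hn0 : 0 < size A by lia.
  apply: leq_trans (hpos (Ordinal Hn0)) _; exact: nth_le_Q.
have Hpm_le : forall l, pm l <= size A by move=> l; apply: setmax_le => x _; exact: ltn_ord.
have Hmove : forall (i : 'I_k.+2) (D : {set 'I_(size A)}), i0 != i -> D \subset S i ->
    0 < sigma A D ->
    sigma A (S i0) + sigma A D <= mxS A k.+2 S ->
    mnS A k.+2 S <= sigma A (S i :\: D) ->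
    sigma A (S i0) + sigma A D <= sigma A (S i) ->
    (sigma A (S i0) + sigma A D < sigma A (S i) \/ p < pm (mv lab i0 D)) -> False.
  move=> i D Hne HD Hd H1 H2 H3 H4.
  have [E1 E2 E3] := mv_sets Hne HD.
  have [F1 F2] := mv_sig Hne HD.
  rewrite -/S in E1 E2 E3 F1 F2.
  have Pl' : P (mv lab i0 D).
    apply: ext_le_trans Plab; apply: ratio_le => // c Hc.
    rewrite -[c]/(nat_of_ord (Ordinal Hc)); set o := Ordinal Hc.
    case: (eqVneq o i0) => [->|Ho0].
      rewrite F1; case/andP: (Hcl i0 (ltn_ord i0)) => Ha _; rewrite H1 andbT.
      exact: leq_trans Ha (leq_addr _ _).
    case: (eqVneq o i) => [->|Hoi].
      rewrite E2 H2 /=; case/andP: (Hcl i (ltn_ord i)) => _ Hb; apply: leq_trans Hb; have := sigmaD HD; lia.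
    by rewrite E3 //; apply: Hcl.
  have Hmu := Hmin _ Pl'.
  have [Phle Phlt] := Phi_mv Hne HD H3.
  have Hpl := Hpm_le lab; have Hpl' := Hpm_le (mv lab i0 D).
  move: Hmu; rewrite /mu -/(pm lab) -/p.
  case: H4 => [Hlt|Hp].
    have H5 : Phi (mv lab i0 D) * (size A).+2 + (size A).+2 <= Phi lab * (size A).+2.
      by rewrite addnC -mulSn leq_mul2r (Phlt Hlt Hd) orbT.
    move: H5 Hpl Hpl'; generalize (Phi (mv lab i0 D) * (size A).+2) (Phi lab * (size A).+2) (pm lab) (pm (mv lab i0 D)).
    lia.
  have H5 : Phi (mv lab i0 D) * (size A).+2 <= Phi lab * (size A).+2 by rewrite leq_mul2r Phle orbT.
  move: H5 Hpl Hpl' Hp; rewrite /p -/(pm lab).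
  generalize (Phi (mv lab i0 D) * (size A).+2) (Phi lab * (size A).+2) (pm lab) (pm (mv lab i0 D)).
  lia.
have P2 : forall j : 'I_(size A), qval A p < j.+1 -> exists2 c, c < k.+2 & S c = [set j].
  move=> j Hj.
  case: (boolP [exists c : 'I_k.+2, S c == [set j]]) => [/existsP [c /eqP Hc]|Hno].
    by exists c.
  exfalso.
  pose i := lab j.
  have HjS : j \in S i by rewrite in_Sof.
  have HQj : Qval A p < nth 0 A j.
    by rewrite ltnNge; apply/negP => /(qval_ge A p j); lia.
  have Hne : i0 != i.
    apply/negP => /eqP E; have := HS0 j; rewrite E => /(_ HjS) Hjp.
    have := nth_le_Q A p j Hjp; lia.
  pose D := S i :\ j.
  have HD : D \subset S i by apply: subsetDl.
  have Hd : 0 < sigma A D.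
    case: (set_0Vmem D) => [D0|[x Hx]].
      move/negP: Hno; case; apply/existsP; exists i; apply/eqP/setP => x; rewrite in_set1.
      apply/idP/idP => [Hx|/eqP->//]; apply/negPn/negP => Hxj.
      have : x \in D by rewrite in_setD1 Hxj Hx.
      by rewrite D0 in_set0.
    exact: leq_trans (hpos x) (sigma_ge A D x Hx).
  have Es : sigma A D + nth 0 A j = sigma A (S i).
    have := @sigmaD A (S i) [set j]; rewrite sub1set HjS => /(_ isT).
    by rewrite /sigma big_set1.
  have Es2 := sigmaD HD.
  case/andP: (Hcl i (ltn_ord i)) => _ Hmx.
  case/andP: (Hcl i0 (ltn_ord i0)) => Hmn0 _.
  by apply: (Hmove i D Hne HD Hd); try lia; left; lia.
have P1 : forall i, i < k.+2 -> (forall j : 'I_(size A), j \in S i -> j.+1 <= qval A p) ->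
    sigma A (S i) < 2 * Qval A p.
  move=> i Hi Hq; rewrite ltnNge; apply/negP => Hbig.
  pose oi := Ordinal Hi.
  change (sigma A (S i)) with (sigma A (S oi)) in Hbig.
  have Hne : i0 != oi.
    by apply/negP => /eqP E; move: Hbig; rewrite -E; lia.
  have [x Hx] : exists x, x \in S oi by apply: sigma_pos; lia.
  have Hax : nth 0 A x <= Qval A p by apply: qval_le => //; exact: Hq.
  pose D := [set x].
  have HD : D \subset S oi by rewrite sub1set.
  have Hd : sigma A D = nth 0 A x by rewrite /sigma big_set1.
  have Es2 := sigmaD HD.
  case/andP: (Hcl oi Hi) => _ Hmx.
  case/andP: (Hcl i0 (ltn_ord i0)) => Hmn0 _.
  have Hxpos := hpos x.
  apply: (Hmove oi D Hne HD); try lia.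
  case: (ltngtP (sigma A (S i0) + sigma A D) (sigma A (S oi))) => Hc; [by left| lia |right].
  have HQeq : sigma A (S i0) = Qval A p by lia.
  have Hall0 : forall j : 'I_(size A), j < p -> j \in S i0.
    move=> j Hj; apply/negPn/negP => Hjn.
    have : nth 0 A j <= \sum_(j0 : 'I_(size A) | (j0 < p) && (j0 \notin S i0)) nth 0 A j0.
      by rewrite (bigD1 j) /= ?Hj ?Hjn //; exact: leq_addr.
    have := hpos j; lia.
  have [E1 E2 E3] := mv_sets Hne HD.
  rewrite -/S in E1 E2 E3.
  have Hxn0 : x \notin S i0.
    apply/negP; rewrite !in_Sof => /eqP H1; move: Hx; rewrite in_Sof => /eqP H2.
    by move: Hne; rewrite (val_inj (etrans (esym H1) H2)) eqxx.
  suff Hall' : forall c : 'I_k.+2, p < setmax (size A) (Sof (mv lab i0 D) c) by apply: Hall'.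
  move=> c.
  have [z Hz Hz0] : exists2 z, z \in Sof (mv lab i0 D) c & z \notin S i0.
    case: (eqVneq c i0) => [->|Hc0].
      by exists x => //; rewrite E1 in_setU in_set1 eqxx orbT.
    have [z Hz] : exists z, z \in Sof (mv lab i0 D) c.
      case: (eqVneq c oi) => [->|Hco].
        apply: sigma_pos; rewrite E2; lia.
      by rewrite E3 //; apply: Hnonempty.
    exists z => //; apply/negP => Hz0.
    have : z \in Sof (mv lab i0 D) i0 by rewrite E1 in_setU Hz0.
    move: Hz; rewrite !in_Sof => /eqP H1 /eqP H2.
    by move: Hc0; rewrite (val_inj (etrans (esym H1) H2)) eqxx.
  have Hzp : p <= z by rewrite leqNgt; apply/negP => /Hall0; apply/negP.
  by apply: leq_ltn_trans Hzp (setmax_mem _ _ _ Hz).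
have Hi0n : forall c, c < k.+2 -> p <= setmax (size A) (S c).
  by move=> c Hc; exact: (Hi0 (Ordinal Hc)).
have Hdist : forall c1 c2, c1 < k.+2 -> c2 < k.+2 -> c1 <> c2 ->
    setmax (size A) (S c1) <> setmax (size A) (S c2).
  move=> c1 c2 H1 H2 H12 E.
  have [x1 Hx1] := Hnonempty c1 H1; have [x2 Hx2] := Hnonempty c2 H2.
  have [w1 Hw1 E1] := setmax_wit _ _ _ Hx1; have [w2 Hw2 E2] := setmax_wit _ _ _ Hx2.
  have Ew : w1 = w2 by apply: val_inj; move: E; rewrite E1 E2 => -[].
  by move: Hw1 Hw2; rewrite Ew !in_Sof => /eqP F1 /eqP F2; apply: H12; rewrite -F1 -F2.
pose sw := fun c : nat => if c == 0 then nat_of_ord i0 else if c == i0 then 0 else c.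
have sw_inv : forall c, sw (sw c) = c.
  move=> c; rewrite /sw; case: (eqVneq c 0) => [->|H0] /=.
    by rewrite eqxx; do ? (case: ifP => /eqP ?); lia.
  case: (eqVneq c i0) => [->|H1] /=.
    by rewrite ?eqxx; do ? (case: ifP => /eqP ?); lia.
  by rewrite ?(negbTE H0) ?(negbTE H1).
have sw_lt : forall c, c < k.+2 -> sw c < k.+2.
  by move=> c Hc; rewrite /sw; case: ifP => _; [exact: ltn_ord|case: ifP].
pose T := fun c => S (sw c).
have HTle : ext_le (ratio A k.+2 T) (ratio A k.+2 S).
  by apply: ratio_le => // c Hc; apply: Hcl; apply: sw_lt.
have HTkp : is_kpart A k.+2 T.
  have [Hd _] := Sof_kpart A k.+2 lab.
  split.
    move=> i j Hi Hj Hij; apply: Hd; try exact: sw_lt.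
    by move=> E; apply: Hij; rewrite -(sw_inv i) -(sw_inv j) E.
  move=> x; exists (sw (lab x)); first exact: sw_lt.
  by rewrite /T sw_inv in_Sof.
have HTR : is_kpartR A k.+2 p T.
  split => //; split.
    by rewrite /T /sw eqxx.
  move=> i /andP [Hi0' Hi].
  have Hc := sw_lt i Hi.
  have Hne : sw i <> i0.
    move=> E; have := sw_inv i; rewrite E /sw; do ? (case: ifP => /eqP ?); lia.
  have := Hi0n _ Hc; have := Hdist _ _ Hc (ltn_ord i0) Hne.
  rewrite /T -/p; lia.
have HTopt : forall U, is_kpart A k.+2 U -> ext_le (ratio A k.+2 T) (ratio A k.+2 U).
  by move=> U HU; apply: ext_le_trans HTle (Hopt U HU).
exists p; split.
  split.
    apply/andP; split => //.
    pose f := fun c : 'I_k.+2 => setmax (size A) (S c) - p.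
    have Hf : forall c : 'I_k.+2, f c < (size A).+1 - p.
      move=> c; have := Hi0n c (ltn_ord c); have : setmax (size A) (S c) <= size A.
        by apply: setmax_le => x _; exact: ltn_ord.
      rewrite /f; lia.
    have Hinj : injective (fun c => Ordinal (Hf c)).
      move=> c1 c2 /(congr1 val) /= E; apply: val_inj; case: (eqVneq (nat_of_ord c1) (nat_of_ord c2)) => // /eqP Hne; exfalso.
      apply: (Hdist c1 c2 (ltn_ord c1) (ltn_ord c2) Hne).
      have := Hi0n c1 (ltn_ord c1); have := Hi0n c2 (ltn_ord c2); move: E; rewrite /f; lia.
    have := leq_card _ Hinj; rewrite !card_ord; lia.
  exists (ratio A k.+2 T); split.
    split; first by exists T.
    by move=> U [HU _]; apply: HTopt.
  split; first by exists T.
  exact: HTopt.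
exists T; split.
  by split => // U [HU _]; apply: HTopt.
split.
  by move=> i Hi Hq; apply: P1 => //; exact: sw_lt.
move=> j Hj; have [c Hc E] := P2 j Hj.
by exists (sw c); [exact: sw_lt | rewrite /T sw_inv].
Qed.
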